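(* For every $n\geq 2$, $\deg(\chi:\{0,1\}^n\to\{0,1\}^n)=3/2$.
   Context: For finite sets $X,Y$ and $f:X\to Y$, $\deg(f)=\frac{1}{|X|}\sum_{y\in Y}|f^{-1}(y)|^2$. Identify $w=w_1\cdots w_n\in\{0,1\}^n$ with a configuration of chips on a path with vertices $1,\dots,n$ (vertex $i$ holds $w_i$ chips); this is the unwrapping of a cycle with $n+1$ vertices, where the extra vertex is a sink adjacent to both vertex $1$ (the source) and vertex $n$. Firing: whenever a vertex holds at least $2$ chips, it sends one chip to each of its two neighbors in the cycle; chips sent to the sink disappear (so an endpoint vertex of the path sends one chip to its path neighbor and loses one chip). Firings are repeated until every vertex holds $0$ or $1$ chip (the final configuration does not depend on the order of firings). Define $\chi(w)$ to be the stable configuration obtained by adding one chip to vertex $1$ of the configuration $w$ and then firing until stable. For example, with $n=3$, $\chi(110)=101$. *)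

(* Defs.v *)
From mathcomp Require Import all_boot all_order all_algebra.
Set Implicit Arguments. Unset Strict Implicit. Unset Printing Implicit Defensive.
Import GRing.Theory Num.Theory.
Local Open Scope ring_scope.

Definition deg (X Y : finType) (f : X -> Y) : rat :=
  (\sum_(y : Y) (#|[set x | f x == y]| ^ 2)%N%:R) / (#|X|%:R).

(* Chip configurations on the path 1..n (0-indexed here) as seq nat.
   Firing vertex i: it loses 2 chips, each path neighbour gains one;
   chips sent past the ends go to the sink and disappear. *)
Definition fire (c : seq nat) (i : nat) : seq nat :=
  [seq ((if j == i then nth 0%N c j - 2 else nth 0%N c j)
        + ((j.+1 == i) || (j == i.+1)))%N | j <- iota 0 (size c)].

Definition step (c : seq nat) : seq nat :=
  let i := find (fun k => 1 < k)%N c in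
  if (i < size c)%N then fire c i else c.

(* Fuel: the total number of firings during stabilization is at most
   n(n+1)^2/4 < (n+2)^4; stable configurations are fixed points of step. *)
Definition stabilize (n : nat) (c : seq nat) : seq nat :=
  iter ((n + 2) ^ 4) step c.

Definition chi (n : nat) (w : n.-tuple bool) : n.-tuple bool :=
  let c0 := incr_nth [seq nat_of_bool b | b <- w] 0 in
  let s := stabilize n c0 in
  [tuple (nth 0%N s i != 0%N) | i < n].

Example stabilize_example :
  stabilize 3 (incr_nth [:: 1; 1; 0]%N 0) = [:: 1; 0; 1]%N.
Proof. vm_compute. reflexivity. Qed.

(* Main.v *)
Require Import Defs.
From mathcomp Require Import all_boot all_order all_algebra zify ring.

Definition incr_head (c : seq nat) : seq nat :=
  if c is y :: c' then y.+1 :: c' else [::].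

Lemma fire_shift (x : nat) (c : seq nat) (i : nat) :
  fire (x :: c) i =
  ((if 0 == i then x - 2 else x) + ((1 == i) || (0 == i.+1)))%N ::
  [seq ((if j.+1 == i then nth 0%N c j - 2 else nth 0%N c j)
        + ((j.+2 == i) || (j.+1 == i.+1)))%N | j <- iota 0 (size c)].
Proof.
rewrite /fire /= -[1%N]/(1 + 0)%N iotaDl -map_comp /=.
congr (_ :: _).
Qed.

Lemma fire0 x c : fire (x :: c) 0 = (x - 2) :: incr_head c.
Proof.
rewrite fire_shift /= addn0; congr (_ :: _).
case: c => [|y c] //=; rewrite -[1%N]/(1 + 0)%N iotaDl -map_comp /=.
congr (_ :: _); first by rewrite addn1.
have E : c = [seq nth 0%N c j | j <- iota 0 (size c)] by rewrite map_nth_iota0 // take_size.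
rewrite [X in _ = X]E.
by apply: eq_map => j /=; rewrite addn0.
Qed.

Lemma fire1 x c : fire (x :: c) 1 = x.+1 :: fire c 0.
Proof.
rewrite fire_shift /= addn1.
congr (_ :: _); rewrite /fire; apply: eq_map => j /=.
Qed.

Lemma fireSS x c i : fire (x :: c) i.+2 = x :: fire c i.+1.
Proof.
rewrite fire_shift /= addn0.
congr (_ :: _); rewrite /fire; apply: eq_map => j /=.
Qed.

Definition P a r := nseq a 1%N ++ 0%N :: 2%N :: r.

Lemma find_P a r : find (fun k => 1 < k)%N (P a r) = a.+1.
Proof. by elim: a => //= a ->. Qed.

Lemma fire_P a r : fire (P a r) a.+1 = nseq a.+1 1%N ++ 0%N :: incr_head r.
Proof.
elim: a => [|a IH]; first by rewrite /P /= fire1 fire0.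
by rewrite /P /= fireSS -/(P a r) IH.
Qed.

Lemma step_P a r : step (P a r) = nseq a.+1 1%N ++ 0%N :: incr_head r.
Proof.
rewrite /step find_P.
have -> : (a.+1 < size (P a r))%N by rewrite /P size_cat size_nseq /= addnS ltnS addnS ltnS leq_addr.
exact: fire_P.
Qed.

Lemma iter_P b a r : iter b.+1 step (P a (nseq b 1%N ++ r)) =
  nseq (a + b).+1 1%N ++ 0%N :: incr_head r.
Proof.
elim: b a => [|b IH] a; first by rewrite addn0 /= step_P.
rewrite iterSr step_P.
have -> : nseq a.+1 1%N ++ 0%N :: incr_head (nseq b.+1 1%N ++ r) = P a.+1 (nseq b 1%N ++ r) by [].
by rewrite IH addSnnS.
Qed.

Lemma step_stable c : all (fun k => k <= 1)%N c -> step c = c.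
Proof.
move=> H; rewrite /step -has_find.
case: hasP => // [[x xc]]; move/allP: H => /(_ x xc).
by rewrite leqNgt => /negbTE ->.
Qed.

Lemma iter_stable m c : all (fun k => k <= 1)%N c -> iter m step c = c.
Proof. by move=> H; elim: m => //= m ->; apply: step_stable. Qed.

Fixpoint g (s : seq bool) : seq bool :=
  match s with
  | [::] => [::]
  | false :: v => true :: v
  | true :: v => head false v :: g v
  end.

Lemma size_g s : size (g s) = size s.
Proof. by elim: s => [|[] s IH] //=; rewrite IH. Qed.

Lemma iter_first b rest : iter b.+1 step (2%N :: map nat_of_bool (nseq b true ++ rest)) =
  nseq b 1%N ++ 0%N :: incr_head (map nat_of_bool rest).
Proof.
have S2 c : step (2%N :: c) = 0%N :: incr_head c by rewrite /step /= fire0.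
case: b => [|b]; first by rewrite /= S2.
rewrite iterSr S2.
have -> : 0%N :: incr_head (map nat_of_bool (nseq b.+1 true ++ rest)) = P 0 (nseq b 1%N ++ map nat_of_bool rest).
  by rewrite /P /= map_cat map_nseq.
by rewrite iter_P.
Qed.

Lemma decomp (v : seq bool) : exists b rest, v = nseq b true ++ rest /\
  (rest = [::] \/ exists u, rest = false :: u).
Proof.
elim: v => [|[] v [b [rest [-> H]]]].
- by exists 0%N, [::]; split=> //; left.
- by exists b.+1, rest.
- by exists 0%N, (false :: (nseq b true ++ rest)); split => //; right; eexists.
Qed.

Lemma g_ones b rest : g (nseq b true ++ true :: rest) = nseq b true ++ g (true :: rest).
Proof.
elim: b => //= b ->; by case: b.
Qed.

Lemma all_map_bool (s : seq bool) : all (fun k => k <= 1)%N (map nat_of_bool s).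
Proof. by elim: s => [|[] s] //=. Qed.

Lemma le_pow4 m : (m <= m ^ 4)%N.
Proof.
case: m => // m; rewrite expnS; apply: leq_pmulr; exact: expn_gt0.
Qed.

Lemma iter_conv k N c s : (k <= N)%N -> iter k step c = s ->
  all (fun k => k <= 1)%N s -> iter N step c = s.
Proof.
by move=> Hk Hc Hs; rewrite -(subnK Hk) iterD Hc iter_stable.
Qed.

Lemma stab_main (w : seq bool) :
  (1 <= size w)%N ->
  stabilize (size w) (incr_nth [seq nat_of_bool b | b <- w] 0) = map nat_of_bool (g w).
Proof.
case: w => [//|[] v] _; last first.
  by rewrite /stabilize iter_stable //=; exact: all_map_bool.
have [b [rest [-> Hr]]] := decomp v.
rewrite /stabilize.
rewrite (@iter_conv b.+1 _ _ (nseq b 1%N ++ 0%N :: incr_head (map nat_of_bool rest))).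
- have -> : true :: nseq b true ++ rest = nseq b true ++ true :: rest by elim: b => //= b ->.
  rewrite g_ones.
  by case: Hr => [->|[u ->]]; rewrite /= map_cat map_nseq.
- apply: (leq_trans _ (le_pow4 _)).
  by rewrite /= size_cat size_nseq addSn ltnS -addnA leq_addr.
- exact: iter_first.
- case: Hr => [->|[u ->]].
    by rewrite all_cat all_nseq /= orbT.
  by rewrite all_cat all_nseq /= orbT /=; exact: all_map_bool.
Qed.

Lemma chi_val n (w : n.-tuple bool) : (1 <= n)%N -> val (chi w) = g w.
Proof.
move=> hn.
apply: (@eq_from_nth _ false); first by rewrite size_tuple size_g size_tuple.
move=> i; rewrite size_tuple => lt.
rewrite /chi.
have := nth_mktuple (fun i0 : 'I_n => nth 0%N (stabilize n (incr_nth [seq nat_of_bool b | b <- w] 0)) i0 != 0%N) false (Ordinal lt).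
rewrite /= => ->.
have := @stab_main w; rewrite size_tuple => -> //.
rewrite (nth_map false); last by rewrite size_g size_tuple.
by case: (nth false (g w) i).
Qed.

Lemma sum_sq (X Y : finType) (f : X -> Y) :
  (\sum_(y : Y) (#|[set x | f x == y]| ^ 2))%N =
  (\sum_(x : X) \sum_(x' : X) nat_of_bool (f x == f x'))%N.
Proof.
have E y : #|[set x | f x == y]| = (\sum_(x : X) nat_of_bool (f x == y))%N.
  rewrite -sum1_card big_mkcond /=; apply: eq_bigr => x _.
  by rewrite inE; case: (f x == y).
under eq_bigr => y _ do rewrite E -mulnn big_distrl /=.
under eq_bigr => y _ do under eq_bigr => x _ do rewrite big_distrr /=.
rewrite exchange_big /=; apply: eq_bigr => x _.
rewrite exchange_big /=; apply: eq_bigr => x' _.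
rewrite (bigD1 (f x)) //= eqxx mul1n big1 ?addn0.
  by rewrite eq_sym.
by move=> y /negbTE; rewrite eq_sym => ->.
Qed.

Lemma sumS k (F : seq bool -> nat) :
  (\sum_(t : k.+1.-tuple bool) F t)%N =
  (\sum_(t : k.-tuple bool) F (false :: t) + \sum_(t : k.-tuple bool) F (true :: t))%N.
Proof.
rewrite (reindex (fun p : bool * k.-tuple bool => [tuple of p.1 :: p.2])) /=; last first.
  exists (fun t : k.+1.-tuple bool => (thead t, [tuple of behead t])).
    by move=> [b t] _; congr (_, _); apply: val_inj.
  by move=> t _; rewrite [in RHS](tuple_eta t).
rewrite -(pair_big predT predT (fun b (t : k.-tuple bool) => F (b :: t))) /=.
by rewrite big_bool addnC.
Qed.

Lemma sum0 (F : seq bool -> nat) : (\sum_(t : 0.-tuple bool) F t)%N = F [::].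
Proof.
rewrite (eq_bigr (fun _ => F [::])); last by move=> t _; rewrite tuple0.
by rewrite sum_nat_const card_tuple expn0 mul1n.
Qed.

Lemma dsplit k (F : seq bool -> seq bool -> nat) :
  (\sum_(x : k.+1.-tuple bool) \sum_(x' : k.+1.-tuple bool) F x x')%N =
  (\sum_(v : k.-tuple bool) \sum_(v' : k.-tuple bool) F (false :: v) (false :: v')
 + \sum_(v : k.-tuple bool) \sum_(v' : k.-tuple bool) F (false :: v) (true :: v')
 + \sum_(v : k.-tuple bool) \sum_(v' : k.-tuple bool) F (true :: v) (false :: v')
 + \sum_(v : k.-tuple bool) \sum_(v' : k.-tuple bool) F (true :: v) (true :: v'))%N.
Proof.
rewrite (sumS k (fun s => \sum_(x' : k.+1.-tuple bool) F s x')).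
under eq_bigr => v _ do rewrite (sumS k (F (false :: val v))).
under [X in (_ + X)%N]eq_bigr => v _ do rewrite (sumS k (F (true :: val v))).
by rewrite !big_split /= !addnA.
Qed.

Lemma one {k} {s : seq bool} : size s = k ->
  (\sum_(w : k.-tuple bool) nat_of_bool (val w == s))%N = 1%N.
Proof.
move=> Hs.
have Hs' : size s == k by apply/eqP.
pose t : k.-tuple bool := Tuple Hs'.
rewrite (bigD1 t) //= eqxx big1 // => w /negbTE.
by rewrite -val_eqE /= => ->.
Qed.

Lemma card_tup k : #|{: k.-tuple bool}| = (2 ^ k)%N.
Proof. by rewrite card_tuple card_bool. Qed.

Lemma diag k :
  (\sum_(v : k.-tuple bool) \sum_(v' : k.-tuple bool) nat_of_bool (val v == val v'))%N = (2 ^ k)%N.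
Proof.
under eq_bigr => v _ do under eq_bigr => v' _ do rewrite eq_sym.
under eq_bigr => v _ do rewrite (one (size_tuple v)).
by rewrite sum_nat_const card_tup muln1.
Qed.

Definition C k := (\sum_(x : k.-tuple bool) \sum_(x' : k.-tuple bool) nat_of_bool (g x == g x'))%N.
Definition M k := (\sum_(x : k.-tuple bool) \sum_(x' : k.-tuple bool)
   nat_of_bool ((true == head false x') && (val x == g x')))%N.
Definition D k := (\sum_(x : k.-tuple bool) \sum_(x' : k.-tuple bool)
   nat_of_bool ((head false x == head false x') && (g x == g x')))%N.

Lemma M_val k : M k.+1 = (2 ^ k)%N.
Proof.
rewrite /M exchange_big /=.
rewrite (eq_bigr (fun x' : k.+1.-tuple bool => nat_of_bool (true == head false x'))).
  rewrite (sumS k (fun s => nat_of_bool (true == head false s))) /=.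
  by rewrite big1 // add0n sum_nat_const card_tup muln1.
move=> x' _; case: (true == head false x') => /=; last by rewrite big1.
by apply: one; rewrite size_g size_tuple.
Qed.

Lemma D_val k : D k = (2 ^ k)%N.
Proof.
elim: k => [|k IH].
  rewrite /D (eq_bigr (fun _ => 1%N)); first by rewrite sum_nat_const card_tup.
  move=> x _; rewrite (eq_bigr (fun _ => 1%N)); first by rewrite sum_nat_const card_tup.
  by move=> x' _; rewrite (tuple0 x) (tuple0 x').
rewrite /D (dsplit k (fun x x' => nat_of_bool ((head false x == head false x') && (g x == g x')))) /=.
rewrite !big1_eq !addn0.
under eq_bigr => v _ do under eq_bigr => v' _ do rewrite eqseq_cons ?eqxx /=.
by rewrite diag -/(D k) IH expnS mul2n -addnn.
Qed.

Lemma C_rec k : C k.+1 = (2 ^ k + M k + M k + D k)%N.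
Proof.
rewrite /C (dsplit k (fun x x' => nat_of_bool (g x == g x'))) /=.
under eq_bigr => v _ do under eq_bigr => v' _ do rewrite eqseq_cons ?eqxx /=.
rewrite diag; congr (_ + _ + _ + _)%N.
rewrite /M exchange_big /=.
apply: eq_bigr => v _; apply: eq_bigr => v' _.
by rewrite eqseq_cons eq_sym; congr (nat_of_bool (_ && _)); rewrite eq_sym.
Qed.

Lemma C_val k : C k.+2 = (3 * 2 ^ k.+1)%N.
Proof.
rewrite C_rec M_val D_val expnS.
by rewrite mulnA (mulnC 3) -mulnA; lia.
Qed.
Import GRing.Theory Num.Theory.

Theorem mainTheorem13 (n : nat) (hn : (2 <= n)%N) :
  deg (@chi n) = (3%:R / 2%:R)%R.
Proof.
rewrite /deg -GRing.natr_sum sum_sq.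
have -> : (\sum_(x : n.-tuple bool) \sum_(x' : n.-tuple bool) nat_of_bool (chi x == chi x'))%N = C n.
  apply: eq_bigr => x _; apply: eq_bigr => x' _.
  by rewrite -val_eqE !chi_val // (leq_trans _ hn).
case: n hn => [|[|k]] // _.
rewrite C_val card_tup.
rewrite (expnS 2 k.+1) !GRing.natrM.
have H : ((2 ^ k.+1)%:R : rat) != 0%R by rewrite pnatr_eq0 expn_eq0.
field.
by rewrite H.
Qed.
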